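(* Let $\mathcal D=(A,D)$ be a dependence alphabet and suppose there are letters $a,b,c,d\in A$ with $a\neq b$, $(a,b)\in D$, and $c\parallel d$. Then there exist an lc-rational relation $\mathcal R\subseteq\mathbb M(\mathcal D)^2$, a rational set $\mathcal K\subseteq\mathbb M(\mathcal D)$ and a recognizable set $\mathcal L\subseteq\mathbb M(\mathcal D)$ such that ${}^{\mathcal R}\mathcal K$ is not rational and $\mathcal L^{\mathcal R}$ is not recognizable.
   Context: A dependence alphabet is $\mathcal D=(A,D)$, $A$ finite, $D\subseteq A\times A$ reflexive and symmetric; letters $x,y$ are independent if $(x,y)\notin D$, and $c\parallel d$ means $c,d$ are independent. $\sim$ is the least congruence on $A^*$ with $xy\sim yx$ for independent $x,y$; $\mathbb M(\mathcal D)=A^*/{\sim}$, $[w]$ the class of $w$, $[L]=\{[u]\mid u\in L\}$, $[R]=\{([u],[v])\mid(u,v)\in R\}$. A trace language $\mathcal K$ is recognizable if $\{u\mid[u]\in\mathcal K\}$ is regular, rational if $\mathcal K=[L]$ for a regular $L$. A word relation $R$ is left-closed if $u\sim u'$, $(u',v')\in R$ imply some $v$ with $(u,v)\in R$, $v\sim v'$; a trace relation is lc-rational if it equals $[R]$ for a left-closed rational word relation $R$. $\mathcal L^{\mathcal R}=\{y\mid\exists x\in\mathcal L:(x,y)\in\mathcal R\}$ and ${}^{\mathcal R}\mathcal L=\{x\mid\exists y\in\mathcal L:(x,y)\in\mathcal R\}$. *)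

(* Defs.v *)
From mathcomp Require Import all_boot.
From Stdlib Require List.
Set Implicit Arguments. Unset Strict Implicit. Unset Printing Implicit Defensive.

Definition regular (A : finType) (L : seq A -> Prop) : Prop :=
  exists (Q : finType) (q0 : Q) (delta : Q -> A -> Q) (F : pred Q),
    forall w, L w <-> F (foldl delta q0 w).

Inductive rexp (A : Type) : Type :=
| REmpty
| RSing of seq A & seq A
| RUnion of rexp A & rexp A
| RCat of rexp A & rexp A
| RStar of rexp A.

Fixpoint rsem (A : Type) (e : rexp A) : seq A -> seq A -> Prop :=
  match e with
  | REmpty => fun _ _ => False
  | RSing u v => fun x y => x = u /\ y = v
  | RUnion e1 e2 => fun x y => rsem e1 x y \/ rsem e2 x y
  | RCat e1 e2 => fun x y => exists x1 x2 y1 y2,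
      [/\ rsem e1 x1 y1, rsem e2 x2 y2, x = x1 ++ x2 & y = y1 ++ y2]
  | RStar e1 => fun x y => exists s : seq (seq A * seq A),
      (forall p, List.In p s -> rsem e1 p.1 p.2) /\
      x = flatten (map fst s) /\ y = flatten (map snd s)
  end.

Definition rational_rel (A : Type) (R : seq A -> seq A -> Prop) : Prop :=
  exists e : rexp A, forall u v, R u v <-> rsem e u v.

Section Traces.
Variables (A : finType) (D : rel A).

Inductive tequiv : seq A -> seq A -> Prop :=
| teq_refl u : tequiv u u
| teq_sym u v : tequiv u v -> tequiv v u
| teq_trans u v w : tequiv u v -> tequiv v w -> tequiv u w
| teq_cat u u' v v' : tequiv u u' -> tequiv v v' -> tequiv (u ++ v) (u' ++ v')
| teq_swap x y : ~~ D x y -> tequiv [:: x; y] [:: y; x].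

Definition trace : Type := {C : seq A -> Prop | exists w, C = tequiv w}.

Definition tclass (w : seq A) : trace :=
  exist (fun C => exists w, C = tequiv w) (tequiv w) (ex_intro _ w erefl).

Definition trace_recognizable (K : trace -> Prop) : Prop :=
  regular (fun u => K (tclass u)).

Definition trace_rational (K : trace -> Prop) : Prop :=
  exists L : seq A -> Prop, regular L /\
    forall t, K t <-> exists u, L u /\ t = tclass u.

Definition left_closed (R : seq A -> seq A -> Prop) : Prop :=
  forall u u' v', tequiv u u' -> R u' v' -> exists v, R u v /\ tequiv v v'.

Definition lc_rational (TR : trace -> trace -> Prop) : Prop :=
  exists R : seq A -> seq A -> Prop, rational_rel R /\ left_closed R /\
    forall s t, TR s t <-> exists u v, [/\ R u v, s = tclass u & t = tclass v].

Definition rel_image (L : trace -> Prop) (TR : trace -> trace -> Prop) :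
  trace -> Prop := fun y => exists x, L x /\ TR x y.
Definition rel_preimage (TR : trace -> trace -> Prop) (L : trace -> Prop) :
  trace -> Prop := fun x => exists y, L y /\ TR x y.

End Traces.

(* Main.v *)
Require Import Defs.
From mathcomp Require Import all_boot zify.
From Stdlib Require Import Classical ProofIrrelevance FunctionalExtensionality PropExtensionality.
From Stdlib Require List.
Set Implicit Arguments. Unset Strict Implicit. Unset Printing Implicit Defensive.

Section Aux.
Variables (A : finType) (D : rel A).

Lemma tclass_eq u v : tequiv D u v -> tclass D u = tclass D v.
Proof.
move=> H.
have E : tequiv D u = tequiv D v.
  apply: functional_extensionality => w; apply: propositional_extensionality; split => Hw.
  - exact: teq_trans (teq_sym H) Hw.
  - exact: teq_trans H Hw.
rewrite /tclass; move: (ex_intro _ _ _) (ex_intro _ _ _); rewrite E => p q.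
by rewrite (proof_irrelevance _ p q).
Qed.

Lemma tclass_inj u v : tclass D u = tclass D v -> tequiv D u v.
Proof.
move=> /(congr1 (@proj1_sig _ _)) /= E.
apply: teq_sym; rewrite -E; exact: teq_refl.
Qed.

Lemma tequiv_count u v : tequiv D u v -> forall x, count_mem x u = count_mem x v.
Proof.
elim=> [u0 x|u0 v0 _ IH x|u0 v0 w0 _ IH1 _ IH2 x|u0 u1 v0 v1 _ IH1 _ IH2 x|x y _ z].
- by [].
- by rewrite IH.
- by rewrite IH1 IH2.
- by rewrite !count_cat IH1 IH2.
- by rewrite /= addnCA.
Qed.

Lemma pigeon (Q : finType) (f : nat -> Q) : exists i j, i < j /\ f i = f j.
Proof.
apply: NNPP => H.
have inj : injective (fun i : 'I_#|Q|.+1 => f i).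
  move=> i j E; apply: val_inj => /=.
  case: (ltngtP i j) => [lt|gt|//]; exfalso; apply: H.
  - by exists i, j.
  - by exists j, i.
have := leq_card _ inj. by rewrite card_ord ltnn.
Qed.

Lemma star_sing (x y : seq A) u v : rsem (RStar (RSing x y)) u v <->
  exists n, u = flatten (nseq n x) /\ v = flatten (nseq n y).
Proof.
split.
- case=> s [Hs [-> ->]]; exists (size s).
  suff [-> ->] : map fst s = nseq (size s) x /\ map snd s = nseq (size s) y by [].
  elim: s Hs => [|p s IH] Hs //=.
  have [Hp1 Hp2] : p.1 = x /\ p.2 = y := Hs p (or_introl erefl).
  have [-> ->] := IH (fun q Hq => Hs q (or_intror Hq)).
  by rewrite Hp1 Hp2.
- case=> n [-> ->]; exists (nseq n (x, y)); split.
  + move=> p; elim: n => [|n IH] //= [<-|/IH //]; by split.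
  + by rewrite !map_nseq.
Qed.

Lemma flat1 (x : A) n : flatten (nseq n [:: x]) = nseq n x.
Proof. by elim: n => //= n ->. Qed.


End Aux.
Section Main.
Variables (A : finType) (D : rel A) (Drefl : reflexive D) (symD : symmetric D)
  (a b c d : A) (ab : a != b) (Dab : D a b) (ncd : ~~ D c d).

Definition isab x := (x == a) || (x == b).

Lemma ab_rigid u v : tequiv D u v -> (all isab u -> u = v) /\ (all isab v -> u = v).
Proof.
elim=> [u0|u0 v0 _ [H1 H2]|u0 v0 w0 _ [H1 H2] _ [H3 H4]|u0 u1 v0 v1 _ [H1 H2] _ [H3 H4]|x y nD].
- by split.
- by split=> H; [rewrite H2 | rewrite H1].
- split=> H.
  + have E := H1 H. rewrite E; apply: H3; by rewrite -E.
  + have E := H4 H. rewrite -E; apply: H2; by rewrite E.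
- split; rewrite !all_cat => /andP[Hu Hv].
  + by rewrite (H1 Hu) (H3 Hv).
  + by rewrite (H2 Hu) (H4 Hv).
- have K : isab x -> isab y -> False.
    rewrite /isab => /orP[] /eqP Ex /orP[] /eqP Ey; move: nD; rewrite Ex Ey;
    by rewrite ?Drefl ?Dab // symD Dab.
  by split=> /= /and3P[H1 H2 _]; exfalso; [exact: K H1 H2 | exact: K H2 H1].
Qed.

Lemma all_isab_a n : all isab (nseq n a).
Proof. by elim: n => //= n ->; rewrite /isab eqxx. Qed.
Lemma all_isab_b n : all isab (nseq n b).
Proof. by elim: n => //= n ->; rewrite /isab eqxx orbT. Qed.

Lemma cdne : c != d.
Proof. by apply/eqP => E; move: ncd; rewrite E Drefl. Qed.

Definition cdn n := flatten (nseq n [:: c; d]).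

Lemma dc_comm n : tequiv D (d :: nseq n c) (nseq n c ++ [:: d]).
Proof.
elim: n => [|n IH] /=; first exact: teq_refl.
apply: (@teq_trans _ _ _ (c :: d :: nseq n c)).
  apply: (@teq_cat _ _ [:: d; c] [:: c; d]); last exact: teq_refl.
  by apply: teq_swap; rewrite symD.
exact: (@teq_cat _ _ [:: c] [:: c]) (teq_refl _ _) IH.
Qed.

Lemma cdn_comm n : tequiv D (cdn n) (nseq n c ++ nseq n d).
Proof.
elim: n => [|n IH] /=; first exact: teq_refl.
apply: (@teq_cat _ _ [:: c] [:: c]); first exact: teq_refl.
apply: (@teq_trans _ _ _ (d :: (nseq n c ++ nseq n d))).
  exact: (@teq_cat _ _ [:: d] [:: d]) (teq_refl _ _) IH.
have := @teq_cat _ _ _ _ (nseq n d) (nseq n d) (dc_comm n) (teq_refl _ _).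
by rewrite -catA.
Qed.

Definition e1 := RStar (RSing [:: a] [:: c; d]).
Definition e2 := RCat (RSing [:: b] [::])
  (RCat (RStar (RSing [:: a] [:: c])) (RStar (RSing [:: b] [:: d]))).
Definition Rw := rsem (RUnion e1 e2).

Lemma Rw_char u v : Rw u v <-> (exists n, u = nseq n a /\ v = cdn n) \/
  (exists n m, u = b :: nseq n a ++ nseq m b /\ v = nseq n c ++ nseq m d).
Proof.
split.
- case=> H.
  + move/star_sing: H => [n [-> ->]]; left; exists n; by rewrite flat1.
  + case: H => x1 [x2 [y1 [y2 [[-> ->] H2 -> ->]]]].
    case: H2 => x3 [x4 [y3 [y4 [/star_sing [n [-> ->]] /star_sing [m [-> ->]] -> ->]]]].
    right; exists n, m; by rewrite !flat1.
- case=> [[n [-> ->]]|[n [m [-> ->]]]].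
  + left; apply/star_sing; exists n; by rewrite flat1.
  + right; exists [:: b], (nseq n a ++ nseq m b), [::], (nseq n c ++ nseq m d).
    split => //.
    exists (nseq n a), (nseq m b), (nseq n c), (nseq m d); split => //;
      apply/star_sing; [exists n | exists m]; by rewrite !flat1.
Qed.

Lemma Rw_ab u v : Rw u v -> all isab u.
Proof.
case/Rw_char => [[n [-> _]]|[n [m [-> _]]]].
- exact: all_isab_a.
- by rewrite /= all_cat all_isab_a all_isab_b /isab eqxx orbT.
Qed.

Lemma Rw_lc : left_closed D Rw.
Proof.
move=> u u' v' Huu' HR; exists v'; split; last exact: teq_refl.
by rewrite ((ab_rigid Huu').2 (Rw_ab HR)).
Qed.


Definition dK (q : option bool) (x : A) : option bool :=
  match q with
  | Some true => if x == c then Some false else None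
  | Some false => if x == d then Some true else None
  | None => None
  end.

Definition Lw w := foldl dK (Some true) w == Some true.

Lemma dK_None w : foldl dK None w = None.
Proof. by elim: w. Qed.

Lemma dK_inv w q : foldl dK q w = Some true ->
  (q = Some true -> count_mem c w = count_mem d w) /\
  (q = Some false -> count_mem d w = (count_mem c w).+1).
Proof.
have dc : (d == c) = false by rewrite eq_sym (negbTE cdne).
have cd' : (c == d) = false by rewrite (negbTE cdne).
elim: w q => [|x w IH] q /=.
- move=> ->; split=> // E; discriminate E.
- move=> H; split=> E; subst q; move: H => /=.
  + case: eqP => [-> H|_]; last by rewrite dK_None.
    have := (IH _ H).2 erefl; rewrite ?eqxx ?cd' => ->; by [].
  + case: eqP => [-> H|_]; last by rewrite dK_None.
    have := (IH _ H).1 erefl; rewrite ?eqxx ?dc => ->; by [].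
Qed.

Lemma Lw_count w : Lw w -> count_mem c w = count_mem d w.
Proof. by move=> /eqP H; exact: (dK_inv H).1. Qed.

Lemma Lw_cdn n : Lw (cdn n).
Proof.
rewrite /Lw; suff -> : foldl dK (Some true) (cdn n) = Some true by [].
elim: n => //= n IH; by rewrite eqxx /= eqxx.
Qed.

Definition TR : trace D -> trace D -> Prop := fun s t =>
  exists u v, [/\ Rw u v, s = tclass D u & t = tclass D v].
Definition KK : trace D -> Prop := fun t => exists u, Lw u /\ t = tclass D u.
Definition LL : trace D -> Prop := fun t => exists n, t = tclass D (nseq n a).

Lemma TR_lc : lc_rational TR.
Proof.
exists Rw; split; last split.
- by exists (RUnion e1 e2).
- exact: Rw_lc.
- by [].
Qed.

Lemma KK_rat : trace_rational KK.
Proof.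
exists Lw; split; last by [].
by exists (option bool), (Some true), dK, (fun q => q == Some true).
Qed.

Lemma foldl_a q w : foldl (fun q x => q && (x == a)) q w = q && all (pred1 a) w.
Proof. elim: w q => [|x w IH] q /=; first by rewrite andbT. by rewrite IH andbA. Qed.

Lemma LL_rec : trace_recognizable LL.
Proof.
exists (bool : finType), true, (fun q x => q && (x == a)), id => w /=.
rewrite foldl_a /=; split.
- case=> n /tclass_inj H.
  by rewrite ((ab_rigid H).2 (all_isab_a n)) all_pred1_nseq.
- move/all_pred1P => ->; by exists (size w).
Qed.

Definition Wd n := b :: nseq n a ++ nseq n b.

Lemma pre_char t : rel_preimage TR KK t <->
  exists n, t = tclass D (nseq n a) \/ t = tclass D (Wd n).
Proof.
split.
- case=> y [[w [Hw ->]] [u [v [HR -> /tclass_inj Hwv]]]].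
  have Cw := Lw_count Hw.
  have Cc := tequiv_count Hwv c; have Cd := tequiv_count Hwv d.
  case/Rw_char: HR => [[n [-> _]]|[n [m [-> Ev]]]].
  + by exists n; left.
  + exists n; right; rewrite /Wd.
    have : m = n.
      have dc : (d == c) = false by rewrite eq_sym (negbTE cdne).
      have cd' : (c == d) = false by rewrite (negbTE cdne).
      move: Cc Cd; rewrite Cw Ev !count_cat !count_nseq /= !eqxx dc cd' => -> /=. lia.
    by move=> ->.
- case=> n [->|->].
  + exists (tclass D (cdn n)); split; first by exists (cdn n); split => //; exact: Lw_cdn.
    exists (nseq n a), (cdn n); split => //; apply/Rw_char; left; by exists n.
  + exists (tclass D (cdn n)); split; first by exists (cdn n); split => //; exact: Lw_cdn.
    exists (Wd n), (nseq n c ++ nseq n d); split => //.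
    * apply/Rw_char; right; by exists n, n.
    * apply: tclass_eq; exact: cdn_comm.
Qed.

Lemma img_char t : rel_image LL TR t <-> exists n, t = tclass D (cdn n).
Proof.
split.
- case=> x [[n ->] [u [v [HR /tclass_inj Hau ->]]]].
  have Eu := (ab_rigid Hau).1 (all_isab_a n).
  case/Rw_char: HR => [[k [_ ->]]|[k [m [Eu' _]]]]; first by exists k.
  exfalso; move: Eu; rewrite Eu'; clear Hau; case: n => //= n [Eab].
  by move: ab; rewrite Eab eqxx.
- case=> n ->; exists (tclass D (nseq n a)); split; first by exists n.
  exists (nseq n a), (cdn n); split => //; apply/Rw_char; left; by exists n.
Qed.


Lemma pre_nonrat : ~ trace_rational (rel_preimage TR KK).
Proof.
case=> L0 [[Q [q0 [dl [F HL]]]] HK].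
have acc n : L0 (Wd n).
  have [u [Lu /tclass_inj Hu]] := (HK (tclass D (Wd n))).1 ((pre_char _).2 (ex_intro _ n (or_intror erefl))).
  have Eu := (ab_rigid Hu).1.
  rewrite Eu //= all_cat all_isab_a all_isab_b /isab eqxx orbT //.
have only u : L0 u -> exists n, u = nseq n a \/ u = Wd n.
  move=> Lu; have [n Hn] := (pre_char _).1 ((HK (tclass D u)).2 (ex_intro _ u (conj Lu erefl))).
  exists n; case: Hn => /tclass_inj H; [left|right]; apply: (ab_rigid H).2.
  - exact: all_isab_a.
  - by rewrite /= all_cat all_isab_a all_isab_b /isab eqxx orbT.
have [i [j [lij Eij]]] := pigeon (fun i => foldl dl q0 (b :: nseq i a)).
have : L0 (b :: nseq j a ++ nseq i b).
  apply/HL; have := (HL _).1 (acc i).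
  by rewrite /Wd -!cat_cons !foldl_cat Eij.
case/only => n [E|E].
- move: E; case: n => //= n [Eba]. by move: ab; rewrite Eba eqxx.
- have ba : (b == a) = false by rewrite eq_sym (negbTE ab).
  have Ca := congr1 (count_mem a) E; have Cb := congr1 (count_mem b) E.
  move: Ca Cb; rewrite /Wd /= !count_cat !count_nseq /= !eqxx ba /=.
  lia.
Qed.

Lemma img_nonrec : ~ trace_recognizable (rel_image LL TR).
Proof.
case=> Q [q0 [dl [F HL]]].
have [i [j [lij Eij]]] := pigeon (fun i => foldl dl q0 (nseq i c)).
have : rel_image LL TR (tclass D (nseq j c ++ nseq i d)).
  apply/HL; have : rel_image LL TR (tclass D (nseq i c ++ nseq i d)).
    apply/img_char; exists i; apply: tclass_eq; apply: teq_sym; exact: cdn_comm.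
  by move/HL; rewrite !foldl_cat -Eij.
case/img_char => n /tclass_inj H.
have H' := teq_trans H (cdn_comm n).
have Cc := tequiv_count H' c; have Cd := tequiv_count H' d.
have dc : (d == c) = false by rewrite eq_sym (negbTE cdne).
have cd' : (c == d) = false by rewrite (negbTE cdne).
move: Cc Cd; rewrite !count_cat !count_nseq /= !eqxx dc cd' /=.
lia.
Qed.

End Main.

Theorem lemma4p17 (A : finType) (D : rel A) :
  reflexive D -> symmetric D ->
  forall a b c d : A, a != b -> D a b -> ~~ D c d ->
  exists (R : trace D -> trace D -> Prop) (K L : trace D -> Prop),
    [/\ lc_rational R, trace_rational K, trace_recognizable L,
        ~ trace_rational (rel_preimage R K)
      & ~ trace_recognizable (rel_image L R)].
Proof.
move=> Dr sD a b c d ab Dab ncd.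
exists (@TR _ D a b c d), (@KK _ D c d), (@LL _ D a).
split.
- exact: TR_lc.
- exact: KK_rat.
- exact: LL_rec.
- exact: (pre_nonrat Dr sD ab Dab ncd).
- exact: (img_nonrec Dr sD ab Dab ncd).
Qed.
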